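(* For each finite alphabet $\Sigma$, let $\mathcal{FV}(\Sigma)$ denote the class of regular languages $L\subseteq\Sigma^*$ having finite variation. Then $\mathcal{FV}$ is a $*$-variety of Eilenberg: for every finite alphabet $\Sigma$, $\mathcal{FV}(\Sigma)$ is closed under the boolean operations (union, intersection, complement in $\Sigma^*$), under left and right quotients by words ($L\mapsto u^{-1}L=\{x: ux\in L\}$ and $L\mapsto Lu^{-1}=\{x: xu\in L\}$ for $u\in\Sigma^*$), and for every monoid homomorphism $h:\Gamma^*\to\Sigma^*$ between free monoids over finite alphabets and every $L\in\mathcal{FV}(\Sigma)$, $h^{-1}(L)\in\mathcal{FV}(\Gamma)$.
   Context: Let $L\subseteq\Sigma^*$ be regular and let $\langle\Sigma,Q,\delta,q_0,F\rangle$ be the minimal deterministic automaton recognizing $L$; write $\delta(u)$ for the state reached from $q_0$ after reading $u\in\Sigma^*$. For $w=\sigma_1\cdots\sigma_n\in\Sigma^*$, its variation is $\mathrm{Var}_L(w)=\#\{0\le k<n : \delta(\sigma_1\cdots\sigma_k)\neq\delta(\sigma_1\cdots\sigma_{k+1})\}$. $L$ has finite variation iff $\sup_{x\in\Sigma^*}\mathrm{Var}_L(x)<\infty$. *)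

(* Defs.v *)
From mathcomp Require Import all_boot all_order.
From mathcomp Require Import boolp.
Set Implicit Arguments. Unset Strict Implicit. Unset Printing Implicit Defensive.

Definition lang (S : finType) := seq S -> bool.

Record dfa (S : finType) := DFA {
  dfa_state : finType;
  dfa_init : dfa_state;
  dfa_trans : dfa_state -> S -> dfa_state;
  dfa_final : pred dfa_state }.

Definition dfa_run (S : finType) (A : dfa S) (q : dfa_state A) (w : seq S) :=
  foldl (@dfa_trans S A) q w.

Definition dfa_accept (S : finType) (A : dfa S) (w : seq S) : bool :=
  @dfa_final S A (@dfa_run S A (@dfa_init S A) w).

Definition regular (S : finType) (L : lang S) : Prop :=
  exists A : dfa S, forall w, L w = dfa_accept A w.

(* The state of the minimal automaton reached after reading u is (identified
   with) the residual u^{-1}L; two prefixes lead to the same state iff their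
   residuals coincide. *)
Definition residual (S : finType) (L : lang S) (u : seq S) : lang S :=
  fun x => L (u ++ x).

Definition same_state (S : finType) (L : lang S) (u v : seq S) : Prop :=
  forall z, residual L u z = residual L v z.

Definition Var (S : finType) (L : lang S) (w : seq S) : nat :=
  count (fun k => `[< ~ same_state L (take k w) (take k.+1 w) >])
        (iota 0 (size w)).

Definition finite_variation (S : finType) (L : lang S) : Prop :=
  exists B : nat, forall x : seq S, Var L x <= B.

Definition FV (S : finType) (L : lang S) : Prop :=
  regular L /\ finite_variation L.

Definition lunion (S : finType) (L1 L2 : lang S) : lang S := fun w => L1 w || L2 w.
Definition linter (S : finType) (L1 L2 : lang S) : lang S := fun w => L1 w && L2 w.
Definition lcompl (S : finType) (L : lang S) : lang S := fun w => ~~ L w.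
Definition lquot (S : finType) (u : seq S) (L : lang S) : lang S := fun x => L (u ++ x).
Definition rquot (S : finType) (L : lang S) (u : seq S) : lang S := fun x => L (x ++ u).
Definition lpreim (G S : finType) (h : seq G -> seq S) (L : lang S) : lang G :=
  fun x => L (h x).

Definition monoid_hom (G S : finType) (h : seq G -> seq S) : Prop :=
  h [::] = [::] /\ forall x y, h (x ++ y) = h x ++ h y.

(* Main.v *)
Require Import Defs.
From mathcomp Require Import all_boot all_order.
From mathcomp Require Import boolp.
Set Implicit Arguments. Unset Strict Implicit. Unset Printing Implicit Defensive.

Section V.
Variable S : finType.
Implicit Types (L : lang S) (w x v : seq S).

Lemma same_refl L x : same_state L x x.
Proof. by []. Qed.

Lemma same_trans L x y z : same_state L x y -> same_state L y z -> same_state L x z.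
Proof. by move=> H1 H2 t; rewrite H1 H2. Qed.

Definition chg L x y : nat := `[< ~ same_state L x y >].

Lemma varS L w a : Var L (rcons w a) = Var L w + chg L w (rcons w a).
Proof.
rewrite /Var size_rcons -addn1 iotaD count_cat /= addn0 add0n; congr (_ + _).
  apply: eq_in_count => k; rewrite mem_iota add0n => /= Hk.
  have E1 : take k (rcons w a) = take k w by rewrite -cats1 takel_cat // ltnW.
  have E2 : take k.+1 (rcons w a) = take k.+1 w by rewrite -cats1 takel_cat.
  by rewrite E1 E2.
have E1 : take (size w) (rcons w a) = w by rewrite -cats1 take_size_cat.
have E2 : take (size w).+1 (rcons w a) = rcons w a by rewrite take_oversize // size_rcons.
by rewrite E1 E2.
Qed.

Lemma var_nil L : Var L [::] = 0.
Proof. by []. Qed.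

End V.
Lemma chg_le (S S' : finType) (L : lang S) (L' : lang S') x y x' y' : (same_state L x' y' -> same_state L' x y) ->
  chg L' x y <= chg L x' y'.
Proof.
move=> H; rewrite /chg; case: (asboolP (~ same_state L' x y)) => //= H1.
have -> : `[< ~ same_state L x' y' >] by apply/asboolP => Hs; apply: H1; exact: H.
by [].
Qed.
Section V2.
Variable S : finType.
Implicit Types (L : lang S) (w x v : seq S).
Lemma chg_le2 L1 L2 L' x y :
  (same_state L1 x y -> same_state L2 x y -> same_state L' x y) ->
  chg L' x y <= chg L1 x y + chg L2 x y.
Proof.
move=> H; rewrite /chg; case: (asboolP (~ same_state L' x y)) => //= H1.
case: (asboolP (~ same_state L1 x y)) => //= H2.
case: (asboolP (~ same_state L2 x y)) => //= H3.
exfalso; apply: H1; apply: H.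
  by case: (EM (same_state L1 x y)) => // /H2.
by case: (EM (same_state L2 x y)) => // /H3.
Qed.

Lemma var_mono L L' w : (forall x y, same_state L x y -> same_state L' x y) ->
  Var L' w <= Var L w.
Proof.
move=> H; elim/last_ind: w => [|w a IH] //.
by rewrite !varS leq_add // chg_le //; apply: H.
Qed.

Lemma var_mono2 L1 L2 L' w :
  (forall x y, same_state L1 x y -> same_state L2 x y -> same_state L' x y) ->
  Var L' w <= Var L1 w + Var L2 w.
Proof.
move=> H; elim/last_ind: w => [|w a IH] //.
rewrite !varS addnACA leq_add // chg_le2 //; exact: H.
Qed.

Lemma var_cat L x v : Var L x + chg L x (x ++ v) <= Var L (x ++ v).
Proof.
elim/last_ind: v => [|v b IH].
  rewrite cats0 /chg; case: (asboolP (~ same_state L x x)) => H; last by rewrite addn0.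
  by exfalso; apply: H.
have E : x ++ rcons v b = rcons (x ++ v) b by rewrite rcons_cat.
rewrite E varS.
apply: leq_trans (leq_add IH (leqnn _)).
rewrite -addnA leq_add2l /chg.
case: (asboolP (~ same_state L x (rcons (x ++ v) b))) => //= H.
case: (asboolP (~ same_state L x (x ++ v))) => //= H1.
case: (asboolP (~ same_state L (x ++ v) (rcons (x ++ v) b))) => //= H2.
exfalso; apply: H; apply: (@same_trans _ _ _ (x ++ v)).
  by case: (EM (same_state L x (x ++ v))) => // /H1.
by case: (EM (same_state L (x ++ v) (rcons (x ++ v) b))) => // /H2.
Qed.
End V2.

Lemma var_lquot (S : finType) (L : lang S) u w : Var (lquot u L) w <= Var L (u ++ w).
Proof.
elim/last_ind: w => [|w a IH] //.
have E : u ++ rcons w a = rcons (u ++ w) a by rewrite rcons_cat.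
rewrite E !varS leq_add // chg_le // => H z.
by move: (H z); rewrite /residual /lquot -E -!catA => ->; rewrite -cats1 -!catA.
Qed.

Lemma var_preim (G S : finType) (h : seq G -> seq S) (L : lang S) w :
  monoid_hom h -> Var (lpreim h L) w <= Var L (h w).
Proof.
case=> h0 hc; elim/last_ind: w => [|w a IH] //.
rewrite -cats1 hc cats1 varS.
apply: leq_trans (var_cat _ _ _); rewrite leq_add //.
apply: chg_le => H z.
by move: (H (h z)); rewrite /residual /lpreim -cats1 -catA !hc -catA => <-.
Qed.

Lemma var_rquot (S : finType) (L : lang S) u w : Var (rquot L u) w <= Var L w.
Proof.
apply: var_mono => x y H z; by move: (H (z ++ u)); rewrite /residual /rquot -!catA.
Qed.

Section Reg.
Variable S : finType.

Definition prod_dfa (A B : dfa S) (f : bool -> bool -> bool) : dfa S :=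
  @DFA S (dfa_state A * dfa_state B)%type (dfa_init A, dfa_init B)
    (fun q a => (dfa_trans q.1 a, dfa_trans q.2 a))
    (fun q => f (dfa_final q.1) (dfa_final q.2)).

Lemma prod_run (A B : dfa S) f q w :
  @dfa_run S (prod_dfa A B f) q w = (dfa_run q.1 w, dfa_run q.2 w).
Proof. by elim: w q => [|a w IH] [q1 q2] //=; rewrite /dfa_run /= -/dfa_run IH. Qed.

Lemma reg_bin (L1 L2 : lang S) f : regular L1 -> regular L2 ->
  regular (fun w => f (L1 w) (L2 w)).
Proof.
move=> [A HA] [B HB]; exists (prod_dfa A B f) => w.
by rewrite /dfa_accept prod_run HA HB.
Qed.

Lemma reg_compl (L : lang S) : regular L -> regular (lcompl L).
Proof.
move=> [A HA]; exists (@DFA S (dfa_state A) (dfa_init A) (@dfa_trans S A)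
  (fun q => ~~ dfa_final q)) => w.
by rewrite /lcompl HA.
Qed.

Lemma reg_lquot (L : lang S) u : regular L -> regular (lquot u L).
Proof.
move=> [A HA]; exists (@DFA S (dfa_state A) (dfa_run (dfa_init A) u) (@dfa_trans S A)
  (@dfa_final S A)) => w.
by rewrite /lquot HA /dfa_accept /dfa_run foldl_cat.
Qed.

Lemma reg_rquot (L : lang S) u : regular L -> regular (rquot L u).
Proof.
move=> [A HA]; exists (@DFA S (dfa_state A) (dfa_init A) (@dfa_trans S A)
  (fun q => dfa_final (dfa_run q u))) => w.
by rewrite /rquot HA /dfa_accept /dfa_run foldl_cat.
Qed.
End Reg.

Lemma reg_preim (G S : finType) (h : seq G -> seq S) (L : lang S) :
  monoid_hom h -> regular L -> regular (lpreim h L).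
Proof.
move=> [h0 hc] [A HA].
pose B := @DFA G (dfa_state A) (dfa_init A) (fun q g => dfa_run q (h [:: g]))
  (@dfa_final S A).
have E : forall (q : dfa_state A) w, @dfa_run G B q w = @dfa_run S A q (h w).
  move=> q w; elim: w q => [|g w IH] q; first by rewrite h0.
  rewrite (_ : g :: w = [:: g] ++ w) // hc /dfa_run foldl_cat.
  by rewrite foldl_cat; exact: IH.
exists B => w; by rewrite /lpreim HA /dfa_accept E.
Qed.

Theorem mainTheorem1 :
  (forall (S : finType) (L1 L2 : lang S),
      FV L1 -> FV L2 -> FV (lunion L1 L2) /\ FV (linter L1 L2)) /\
  (forall (S : finType) (L : lang S), FV L -> FV (lcompl L)) /\
  (forall (S : finType) (L : lang S) (u : seq S),
      FV L -> FV (lquot u L) /\ FV (rquot L u)) /\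
  (forall (G S : finType) (h : seq G -> seq S) (L : lang S),
      monoid_hom h -> FV L -> FV (lpreim h L)).
Proof.
split; [|split; [|split]].
- move=> S L1 L2 [R1 [B1 V1]] [R2 [B2 V2]]; split; split.
  + exact: (reg_bin orb R1 R2).
  + exists (B1 + B2) => x; apply: leq_trans (leq_add (V1 x) (V2 x)).
    apply: var_mono2 => y z H1 H2 t; by move: (H1 t) (H2 t); rewrite /residual /lunion => -> ->.
  + exact: (reg_bin andb R1 R2).
  + exists (B1 + B2) => x; apply: leq_trans (leq_add (V1 x) (V2 x)).
    apply: var_mono2 => y z H1 H2 t; by move: (H1 t) (H2 t); rewrite /residual /linter => -> ->.
- move=> S L [R [B V]]; split; first exact: reg_compl.
  exists B => x; apply: leq_trans (V x).
  apply: var_mono => y z H t; by move: (H t); rewrite /residual /lcompl => ->.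
- move=> S L u [R [B V]]; split; split.
  + exact: reg_lquot.
  + exists B => x; exact: leq_trans (var_lquot _ _ _) (V _).
  + exact: reg_rquot.
  + exists B => x; exact: leq_trans (var_rquot _ _ _) (V _).
- move=> G S h L hh [R [B V]]; split; first exact: reg_preim.
  exists B => x; exact: leq_trans (var_preim _ _ hh) (V _).
Qed.
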